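(* Let $\ell$ and $m$ be positive integers with $\ell\le m$, let $G$ be a torsion-free group written additively (not necessarily abelian), let $\mathbf{a}=(a_1,\dots,a_m)$ be a sequence of elements of $G$, and let $A$ be the set of distinct terms of $\mathbf{a}$. Then \[ |\Sigma^{\ell}(\mathbf{a})|\ \ge\ \sum_{a\in A}\mu_{\mathbf{a}}(a)-\ell+1 . \]
   Context: $\Sigma^{\ell}(\mathbf{a})$ is the set of all elements $a_{i_1}+\cdots+a_{i_\ell}$ with $i_1,\dots,i_\ell\in[1,m]$ pairwise distinct indices, taken in any order (the sums of $\ell$ terms of $\mathbf{a}$). For $a\in G$, $\rho_a(\mathbf{a})=|\{i\in[1,m]:a_i=a\}|$ and $\mu_{\mathbf{a}}(a)=\min(\ell,\rho_a(\mathbf{a}))$. *)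

(* Defs.v *)
From HB Require Import structures.
From mathcomp Require Import all_boot all_order all_algebra all_fingroup.
Set Implicit Arguments. Unset Strict Implicit. Unset Printing Implicit Defensive.

(* The group G is a (possibly infinite, possibly non-abelian) MathComp
   [groupType]; the paper's additive notation a + b is rendered as the
   group law a * b, 0 as 1, and n.a as a ^+ n. *)

Local Open Scope group_scope.

Definition torsion_free (G : groupType) : Prop :=
  forall (x : G) (n : nat), (0 < n)%N -> x ^+ n = 1 -> x = 1.

Definition Sigma (G : groupType) (m l : nat) (a : 'I_m -> G) : seq G :=
  undup [seq \prod_(i <- val t) a i
        | t <- enum [pred t : l.-tuple 'I_m | uniq t]].

Definition terms (G : groupType) (m : nat) (a : 'I_m -> G) : seq G :=
  undup [seq a i | i <- enum 'I_m].

Definition rho (G : groupType) (m : nat) (a : 'I_m -> G) (x : G) : nat :=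
  #|[pred i : 'I_m | a i == x]|.

Definition mu (G : groupType) (m l : nat) (a : 'I_m -> G) (x : G) : nat :=
  minn l (rho a x).

(* Main.v *)
Require Import Defs.
From HB Require Import structures.
From mathcomp Require Import all_boot all_order all_algebra all_fingroup.
From mathcomp Require Import finmap zify.
From Stdlib Require Classical_Prop.
Set Implicit Arguments. Unset Strict Implicit. Unset Printing Implicit Defensive.
Section Helpers.
Local Open Scope fset_scope.
Local Open Scope nat_scope.
Local Open Scope group_scope.
Section K.
Variable G : groupType.
Implicit Types X Y B : {fset G}.
Definition pmul (X B : {fset G}) : {fset G} := [fset x * y | x in X, y in B].
Lemma pmulP X B z : reflect (exists2 x, x \in X & exists2 y, y \in B & z = x * y) (z \in pmul X B).
Proof. exact: imfset2P. Qed.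
Lemma pmul_in X B x y : x \in X -> y \in B -> x * y \in pmul X B.
Proof. by move=> hx hy; apply/pmulP; exists x => //; exists y. Qed.
Lemma pmulS X Y B : X `<=` Y -> pmul X B `<=` pmul Y B.
Proof.
move/fsubsetP=> s; apply/fsubsetP=> z /pmulP [x hx [y hy ->]]; apply: pmul_in => //; exact: s.
Qed.
Definition lt (g : G) X : {fset G} := [fset g * x | x in X].
Lemma card_lt g X : #|` lt g X| = #|` X|.
Proof. by rewrite card_imfset //= => x y; apply: mulgI. Qed.
Lemma lt_pmul g X B : pmul (lt g X) B = lt g (pmul X B).
Proof.
apply/fsetP=> z; apply/pmulP/imfsetP => /=.
  case=> _ /imfsetP [x hx ->] [y hy ->]; exists (x * y); first exact: pmul_in.
  by rewrite mulgA.
case=> _ /pmulP [x hx [y hy ->]] ->; exists (g * x); first by apply/imfsetP; exists x.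
by exists y => //; rewrite mulgA.
Qed.
Lemma mem_lt g X x : x \in X -> g * x \in lt g X.
Proof. by move=> h; apply/imfsetP; exists x. Qed.
Lemma card_pmul_ge X B y : y \in B -> #|` X| <= #|` pmul X B|.
Proof.
move=> hy; have -> : #|` X| = #|` [fset x * y | x in X]|.
  by rewrite card_imfset //= => u v; apply: mulIg.
apply: fsubset_leq_card; apply/fsubsetP=> z /imfsetP [x hx ->]; exact: pmul_in.
Qed.
Lemma pmul_subU X Y B : pmul (X `|` Y) B `<=` pmul X B `|` pmul Y B.
Proof.
apply/fsubsetP=> z /pmulP [x]; rewrite in_fsetU => /orP [] hx [y hy ->];
  rewrite in_fsetU; apply/orP; [left|right]; exact: pmul_in.
Qed.
Lemma pmul_subI X Y B : pmul (X `&` Y) B `<=` pmul X B `&` pmul Y B.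
Proof.
apply/fsubsetP=> z /pmulP [x]; rewrite in_fsetI => /andP [hx hx'] [y hy ->].
by rewrite in_fsetI !pmul_in.
Qed.
Lemma submod X Y B : #|` pmul (X `&` Y) B| + #|` pmul (X `|` Y) B| <= #|` pmul X B| + #|` pmul Y B|.
Proof.
rewrite -(cardfsUI (pmul X B) (pmul Y B)) addnC; apply: leq_add; apply: fsubset_leq_card.
  exact: pmul_subU.
exact: pmul_subI.
Qed.
Lemma card_pmul_ge2 X B x : x \in X -> #|` B| <= #|` pmul X B|.
Proof.
move=> hx; have -> : #|` B| = #|` [fset x * y | y in B]|.
  by rewrite card_imfset //= => u v; apply: mulgI.
apply: fsubset_leq_card; apply/fsubsetP=> z /imfsetP [y hy ->]; exact: pmul_in.
Qed.
End K.

Lemma exmin (P : nat -> Prop) n : P n -> exists m, P m /\ forall k, P k -> m <= k.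
Proof.
elim: n {-2}n (leqnn n) => [|N IH] n hn Pn.
  exists n; split => // k _; move: hn; rewrite leqn0 => /eqP ->; done.
case: (Classical_Prop.classic (exists k, k < n /\ P k)) => [[k [hk Pk]]|hno].
  apply: (IH k) => //; lia.
exists n; split => // k Pk; rewrite leqNgt; apply/negP => hk; apply: hno; by exists k.
Qed.

Lemma torsion_inj (G : groupType) (g : G) : torsion_free G -> g != 1 ->
  forall i j, g ^+ i = g ^+ j -> i = j.
Proof.
move=> tf ng.
have key : forall i j, i <= j -> g ^+ i = g ^+ j -> i = j.
  move=> i j hij e; move: e; rewrite -(subnKC hij) expgnDr -{1}(mulg1 (g ^+ i)).
  move/mulgI => e; case: (posnP (j - i)) => h; first lia.
  by move: ng; rewrite (tf g (j - i) h (esym e)) eqxx.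
move=> i j e; case: (leqP i j) => h; first exact: key.
by apply/esym/key => //; exact: ltnW.
Qed.

Lemma kemperman (G : groupType) (B X : {fset G}) : torsion_free G ->
  B != fset0 -> X != fset0 -> #|` X| + #|` B| <= #|` pmul X B| + 1.
Proof.
move=> tf nB nX.
have [b0 hb0] : exists b, b \in B.
  by case: (fset_0Vmem B) => [e|[b hb]]; [move: nB; rewrite e eqxx | exists b].
have ge : forall Y : {fset G}, #|` Y| <= #|` pmul Y B| by move=> Y; exact: card_pmul_ge hb0.
pose P1 k := exists Y : {fset G}, Y != fset0 /\ #|` pmul Y B| = #|` Y| + k.
have [kap [[Y0 [nY0 eY0]] kmin]] : exists m, P1 m /\ forall k, P1 k -> m <= k.
  apply: (@exmin P1 (#|` pmul X B| - #|` X|)%N); exists X; split => //.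
  by have := ge X; lia.
have kmin' : forall Y : {fset G}, Y != fset0 -> #|` Y| + kap <= #|` pmul Y B|.
  move=> Y nY; have := kmin (#|` pmul Y B| - #|` Y|)%N; have := ge Y.
  move=> h1 h2; suff : kap <= (#|` pmul Y B| - #|` Y|)%N by lia.
  by apply: h2; exists Y; split => //; lia.
pose frag (Y : {fset G}) := Y != fset0 /\ #|` pmul Y B| = #|` Y| + kap.
pose P2 n := exists Y, frag Y /\ #|` Y| = n.
have [n0 [[H0 [fH0 cH0]] nmin]] : exists m, P2 m /\ forall k, P2 k -> m <= k.
  by apply: (@exmin P2 #|` Y0|); exists Y0; split.
have fI : forall Y Z, frag Y -> frag Z -> Y `&` Z != fset0 -> frag (Y `&` Z).
  move=> Y Z [nY eY] [nZ eZ] nYZ; split => //.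
  have nU : Y `|` Z != fset0.
    rewrite -cardfs_gt0; rewrite -cardfs_gt0 in nY.
    by apply: (leq_trans nY); apply: fsubset_leq_card; apply: fsubsetUl.
  have h1 := kmin' _ nYZ; have h2 := kmin' _ nU; have h3 := submod Y Z B.
  have h4 := cardfsUI Y Z. lia.
have fT : forall g Y, frag Y -> frag (lt g Y).
  move=> g Y [nY eY]; split; first by rewrite -cardfs_gt0 card_lt cardfs_gt0.
  by rewrite lt_pmul !card_lt.
have [h0 hh0] : exists h, h \in H0.
  by case: (fset_0Vmem H0) => [e|[b hb]]; [case: fH0; rewrite e eqxx | exists b].
pose H := lt h0^-1 H0.
have fH : frag H by apply: fT.
have cH : #|` H| = n0 by rewrite card_lt.
have closed : forall h y, h \in H -> y \in H -> h^-1 * y \in H.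
  move=> h y hh hy.
  have fK := fT h _ fH.
  have nI : H `&` lt h H != fset0.
    apply/negP => /eqP e.
    have : h \in H `&` lt h H.
      by rewrite in_fsetI hh /=; rewrite -{1}(mulg1 h); apply: mem_lt; rewrite /H -(mulVg h0); apply: mem_lt.
    by rewrite e in_fset0.
  have fHK := fI _ _ fH fK nI.
  have : n0 <= #|` H `&` lt h H| by apply: nmin; exists (H `&` lt h H); split.
  move=> hc.
  have /eqP eq : H `&` lt h H == H by rewrite eqEfcard fsubsetIl cH.
  have : y \in H `&` lt h H by rewrite eq.
  rewrite in_fsetI => /andP [_ /imfsetP [z hz ->]].
  by rewrite mulKg.
have one : 1 \in H by rewrite /H -(mulVg h0); apply: mem_lt.
have all1 : forall h, h \in H -> h = 1.
  move=> h hh; set g := h^-1.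
  have pw : forall n, g ^+ n \in H.
    elim=> [|n IHn]; first by rewrite expg0.
    by rewrite expgS; apply: closed.
  case: (eqVneq g 1) => [e|ng]; first by rewrite -(invgK h) -/g e invg1.
  have inj := torsion_inj tf ng.
  pose s := [seq g ^+ i | i <- iota 0 (#|` H|).+1].
  have us : uniq s by rewrite map_inj_in_uniq ?iota_uniq // => i j _ _; apply: inj.
  have : size s <= size (enum_fset H).
    apply: uniq_leq_size => // z /mapP [i _ ->]; exact: pw.
  by rewrite size_map size_iota; lia.
have cH1 : #|` H| <= 1.
  rewrite -(cardfs1 (1 : G)); apply: fsubset_leq_card; apply/fsubsetP => h hh.
  by rewrite (all1 h hh) in_fset1.
have := card_pmul_ge2 B one; case: fH => _ eH.
have := kmin' _ nX. lia.
Qed.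

Section P.
Variables (G : groupType) (m : nat) (a : 'I_m -> G).

Fixpoint PS (l : nat) (D : {set 'I_m}) : {fset G} :=
  match l with
  | 0 => [fset (1 : G)]
  | l'.+1 => \big[@fsetU _/fset0]_(i in D) [fset a i * y | y in PS l' (D :\ i)%SET]
  end.

Lemma PS_S l (D : {set 'I_m}) y : reflect (exists2 i, i \in D & exists2 z, z \in PS l (D :\ i)%SET & y = a i * z) (y \in PS l.+1 D).
Proof.
rewrite /=; apply: (iffP idP).
  case/bigfcupP => i /andP [_ hi] /imfsetP [z hz ->]; by exists i => //; exists z.
case=> i hi [z hz ->]; apply/bigfcupP; exists i; first by rewrite mem_index_enum.
by apply/imfsetP; exists z.
Qed.

Lemma PS_mono l (D D' : {set 'I_m}) : D \subset D' -> PS l D `<=` PS l D'.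
Proof.
elim: l D D' => [|l IH] D D' s //=; apply/fsubsetP=> y /PS_S [i hi [z hz ->]].
apply/PS_S; exists i; first exact: (subsetP s).
exists z => //; apply: (fsubsetP (IH _ _ _)) hz; exact: setSD.
Qed.

Lemma PS_ne l (D : {set 'I_m}) : l <= #|D| -> exists y, y \in PS l D.
Proof.
elim: l D => [|l IH] D hl; first by exists 1; rewrite in_fset1.
have : 0 < #|D| by lia.
case/card_gt0P => i hi.
have [z hz] : exists z, z \in PS l (D :\ i)%SET by apply: IH; rewrite (cardsD1 i D) hi in hl; lia.
by exists (a i * z); apply/PS_S; exists i => //; exists z.
Qed.

Lemma PS_tuple l (D : {set 'I_m}) y : y \in PS l D ->
  exists t : l.-tuple 'I_m, [/\ uniq t, all (mem D) t & y = \prod_(i <- t) a i].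
Proof.
elim: l D y => [|l IH] D y /=.
  rewrite in_fset1 => /eqP ->; exists [tuple]; split => //; by rewrite big_nil.
move/PS_S => [i hi [z hz ->]]; have [t [ut at_ ez]] := IH _ _ hz.
exists [tuple of i :: t]; split => /=.
- rewrite ut andbT; apply/negP => it; move/allP: at_ => /(_ _ it); by rewrite !inE eqxx.
- rewrite hi /=; apply/allP => j jt; move/allP: at_ => /(_ _ jt); rewrite !inE; by case/andP.
- by rewrite big_cons ez.
Qed.

Lemma PS_Sigma l y : y \in PS l [set: 'I_m] -> y \in Sigma l a.
Proof.
case/PS_tuple => t [ut _ ->]; rewrite mem_undup; apply/mapP; exists t => //.
by rewrite mem_enum.
Qed.

Lemma subset_card (T : finType) (A : {set T}) k : k <= #|A| -> exists B : {set T}, B \subset A /\ #|B| = k.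
Proof.
elim: k => [|k IH] hk; first by exists set0; rewrite sub0set cards0.
have [B [sB cB]] := IH (ltnW hk).
have : B \proper A by rewrite properEcard sB cB hk.
case/properP => _ [x xA xB]; exists (x |: B); split.
  by rewrite subUset sub1set xA.
by rewrite cardsU1 xB cB.
Qed.

Definition rhoD (D : {set 'I_m}) x := #|[set i in D | a i == x]|.
Definition SD (D : {set 'I_m}) l := (\sum_(x <- terms a) minn l (rhoD D x))%N.

Lemma main_ind : torsion_free G -> forall l (D : {set 'I_m}), l <= #|D| -> SD D l + 1 <= #|` PS l D| + l.
Proof.
move=> tf; elim=> [|l IH] D hl.
  rewrite /SD big1 /=; first by rewrite cardfs1.
  by move=> x _; rewrite min0n.
pose Tf := [set i in D | [forall j in D, (a j == a i) ==> (i <= j)]].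
have TfD : Tf \subset D by apply/subsetP => i; rewrite inE; case/andP.
have Tfinj : {in Tf &, injective a}.
  move=> i j; rewrite !inE => /andP [hi /forall_inP fi] /andP [hj /forall_inP fj] e.
  apply/val_inj/eqP; rewrite eqn_leq.
  move: (fi j hj) (fj i hi); rewrite e eqxx /= => -> ->; done.
have hits : forall i, i \in D -> exists2 j, j \in Tf & a j = a i.
  move=> i hi.
  pose P := fun j => (j \in D) && (a j == a i).
  have Pi : P i by rewrite /P /= hi eqxx.
  case: (@arg_minnP _ i P (fun j : 'I_m => val j) Pi) => j /andP [hj /eqP ej] mn.
  exists j => //; rewrite inE hj /=; apply/forall_inP => k hk; apply/implyP => /eqP e.
  by apply: mn; rewrite /P hk e ej eqxx.
have [T [TTf cT]] := subset_card (geq_minl #|Tf| (#|D| - l)).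
have TD : T \subset D := subset_trans TTf TfD.
have Tinj : {in T &, injective a}.
  by move=> i j hi hj; apply: Tfinj; apply: (subsetP TTf).
have cDT : #|D :\: T| = #|D| - #|T|.
  by rewrite cardsD (setIidPr TD).
have cTf : 0 < #|Tf|.
  have : 0 < #|D| by lia.
  case/card_gt0P => i hi; have [j hj _] := hits i hi; apply/card_gt0P; by exists j.
have cT1 : 0 < #|T| by rewrite cT; lia.
have cTD : #|T| <= #|D| - l by rewrite cT geq_minr.
have cases : T = Tf \/ #|T| = #|D| - l.
  case: (leqP #|Tf| (#|D| - l)) => h.
    left; apply/eqP; rewrite eqEcard TTf /= cT (minn_idPl h) leqnn //.
  right; rewrite cT; apply/minn_idPr; exact: ltnW.
pose A : {fset G} := [fset a i | i in T].
have cA : #|` A| = #|T|.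
  rewrite card_in_imfset; last by move=> i j hi hj; apply: Tinj.
  rewrite cardE; apply: perm_size; apply: uniq_perm; rewrite ?enum_finmem_uniq ?enum_uniq //.
have memA : forall x, reflect (exists2 i, i \in T & x = a i) (x \in A).
  move=> x; apply: (iffP idP) => [/imfsetP [i hi ->]|[i hi ->]]; [by exists i | by apply/imfsetP; exists i].
have [y0 hy0] := PS_ne (l := l) (D := D :\: T) ltac:(lia).
have nPS : PS l (D :\: T) != fset0.
  by apply/negP => /eqP e; move: hy0; rewrite e in_fset0.
have nA : A != fset0.
  case/card_gt0P: cT1 => i hi; apply/negP => /eqP e.
  have : a i \in A by apply/memA; exists i.
  by rewrite e in_fset0.
have K := kemperman tf nPS nA.
have sub : pmul A (PS l (D :\: T)) `<=` PS l.+1 D.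
  apply/fsubsetP => z /pmulP [x /memA [i hi ->] [y hy ->]].
  apply/PS_S; exists i; first exact: (subsetP TD).
  have sDi : (D :\: T) \subset (D :\ i)%SET.
    apply/subsetP => k; rewrite !inE => /andP [kT ->]; rewrite andbT.
    by apply/negP => /eqP ek; move: kT; rewrite ek hi.
  exists y => //; exact: (fsubsetP (PS_mono l sDi)) y hy.
have IH' := IH (D :\: T) ltac:(lia).
have sumA : (\sum_(x <- terms a) (x \in A))%N = #|T|.
  rewrite -cA; transitivity (count (mem A) (terms a)).
    rewrite -sum1_count [RHS]big_mkcond /=; apply: eq_bigr => x _; by case: (x \in A).
  rewrite -size_filter; apply: perm_size; apply: uniq_perm; [by rewrite filter_uniq // undup_uniq | exact: fset_uniq | ].
  move=> x; rewrite mem_filter /=; apply/andP/idP => [[]//|xA]; split=> //.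
  case/memA: xA => i _ ->; rewrite mem_undup; apply: map_f; exact: mem_enum.
have cnt : SD D l.+1 <= SD (D :\: T) l + #|T|.
  rewrite -sumA /SD -big_split /=; apply: leq_sum => x _.
  have spl : rhoD D x = rhoD (D :\: T) x + #|[set i in T | a i == x]|.
    rewrite /rhoD -(cardsID T [set i in D | a i == x]) addnC.
    have e1 : [set i in D | a i == x] :&: T = [set i in T | a i == x].
      apply/setP => k0; rewrite !inE; case kT: (k0 \in T); rewrite ?andbF ?andbT //=.
      by rewrite (subsetP TD _ kT).
    have e2 : [set i in D | a i == x] :\: T = [set i in D :\: T | a i == x].
      apply/setP => k0; rewrite !inE; case kT: (k0 \in T) => //=.
    by rewrite e1 e2.
  case: (boolP (x \in A)) => xA.
    case/memA: (xA) => j hj ej.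
    have eS : [set i in T | a i == x] = [set j].
      apply/setP => k0; rewrite !inE ej; apply/andP/eqP => [[hk0 /eqP e]|->]; last by rewrite hj eqxx.
      exact: Tinj.
    rewrite eS cards1 in spl; rewrite spl; lia.
  have eS : [set i in T | a i == x] = set0.
    apply/setP => i; rewrite !inE; apply/negP => /andP [hi /eqP e]; move/negP: xA; apply; apply/memA.
    by exists i.
  rewrite eS cards0 addn0 in spl; rewrite spl /=.
  case: (leqP (rhoD (D :\: T) x) l) => hr; first lia.
  exfalso.
  have : 0 < rhoD D x by lia.
  case/card_gt0P => i; rewrite inE => /andP [hi /eqP ei].
  have [j hj ej] := hits i hi.
  case: cases => [eT|eT].
    move/negP: xA; apply; apply/memA; exists j; by rewrite ?eT // ej ei.
  have : rhoD (D :\: T) x <= #|D :\: T|.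
    by apply: subset_leq_card; apply/subsetP => k; rewrite inE; case/andP.
  lia.
have := fsubset_leq_card sub.
lia.
Qed.

End P.

End Helpers.

Import GRing.Theory Num.Theory.
Local Open Scope ring_scope.

Theorem theorem6p1 (G : groupType) (l m : nat) (a : 'I_m -> G) :
  (0 < l)%N -> (l <= m)%N -> torsion_free G ->
  ((\sum_(x <- terms a) mu l a x)%N)%:Z - l%:Z + 1
    <= (size (Sigma l a))%:Z.
Proof.
move=> l0 lm tf.
have h := @main_ind G m a tf l setT ltac:(by rewrite cardsT card_ord).
have eS : SD a setT l = (\sum_(x <- terms a) mu l a x)%N.
  apply: eq_bigr => x _; rewrite /mu /rho /rhoD; congr minn; apply: eq_card => i; by rewrite !inE.
have hs : (#|` PS a l setT| <= size (Sigma l a))%N.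
  apply: uniq_leq_size; first exact: fset_uniq.
  by move=> y hy; apply: PS_Sigma.
rewrite eS in h.
lia.
Qed.
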